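(* Let $x = (x_1, \ldots, x_n)$ and $y = (y_1, \ldots, y_n)$ be vectors in $\mathbb{R}^n$ with $\sum_i x_i = \sum_i y_i = 0$. Then $$\sum_{1 \leq i < j \leq n} (x_i - x_j)^2 (y_i - y_j)^2 \geq \|x\|^2 \|y\|^2,$$ where $\|\cdot\|$ is the Euclidean norm. *)

(* Defs.v *)
From mathcomp Require Import all_boot all_order all_algebra.
From mathcomp Require Import reals.
Set Implicit Arguments. Unset Strict Implicit. Unset Printing Implicit Defensive.

(* Main.v *)
Require Import Defs.
From mathcomp Require Import all_boot all_order all_algebra.
From mathcomp Require Import reals.
From mathcomp Require Import ring lra.
Import Order.TTheory GRing.Theory Num.Theory.
Local Open Scope ring_scope.

Lemma sym_sum (R : realType) (n : nat) (f : 'I_n -> 'I_n -> R)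
  (fs : forall i j, f i j = f j i) (f0 : forall i, f i i = 0) :
  \sum_(i < n) \sum_(j < n) f i j = 2 * \sum_(i < n) \sum_(j < n | (i < j)%N) f i j.
Proof.
have E : forall i, \sum_(j < n) f i j = \sum_(j < n | (i < j)%N) f i j + \sum_(j < n | (j < i)%N) f i j.
  move=> i; rewrite (bigID (fun j : 'I_n => (i < j)%N)) /=; congr (_ + _).
  rewrite (bigID (fun j : 'I_n => (j < i)%N)) /= [X in _ + X]big1 ?addr0.
    by apply: eq_bigl => j; case: (ltngtP i j).
  move=> j /andP[h1 h2]; have -> : j = i by apply: ord_inj; rewrite -leqNgt in h1; rewrite -leqNgt in h2; apply/eqP; rewrite eqn_leq h1 h2.
  exact: f0.
rewrite (eq_bigr _ (fun i _ => E i)) big_split /= mulr_natl mulr2n; congr (_ + _).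

under eq_bigr => i _ do rewrite big_mkcond.
rewrite exchange_big /=; apply: eq_bigr => i _; rewrite [RHS]big_mkcond /=.
by apply: eq_bigr => j _; rewrite fs.
Qed.

Theorem lemma3 (R : realType) (n : nat) (x y : 'I_n -> R)
  (hx : \sum_(i < n) x i = 0) (hy : \sum_(i < n) y i = 0) :
  (\sum_(i < n) x i ^+ 2) * (\sum_(i < n) y i ^+ 2)
  <= \sum_(i < n) \sum_(j < n | (i < j)%N) (x i - x j) ^+ 2 * (y i - y j) ^+ 2.
Proof.
set X := \sum_(i < n) x i ^+ 2; set Y := \sum_(i < n) y i ^+ 2.
set A := \sum_(i < n) x i ^+ 2 * y i ^+ 2.
set P := \sum_(i < n) x i * y i.
set U := \sum_(i < n) x i ^+ 2 * y i.
set V := \sum_(i < n) x i * y i ^+ 2.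
have inner : forall i, \sum_(j < n) (x i - x j) ^+ 2 * (y i - y j) ^+ 2 =
   n%:R * (x i ^+ 2 * y i ^+ 2) + Y * x i ^+ 2 + (4 * P) * (x i * y i) + (-2 * V) * x i
   + X * y i ^+ 2 + (-2 * U) * y i + A.
  move=> i; set a := x i; set b := y i.
  rewrite (eq_bigr (fun j => (a^+2*b^+2) + (-2*a^+2*b) * y j + a^+2 * y j^+2 + (-2*a*b^+2) * x j
     + (4*a*b)*(x j*y j) + (-2*a)*(x j * y j^+2) + b^+2 * x j^+2 + (-2*b)*(x j^+2*y j)
     + x j^+2*y j^+2)); last by move=> j _; ring.
  rewrite !big_split /= -!mulr_sumr sumr_const card_ord hx hy -/X -/Y -/A -/P -/U -/V.

  rewrite -mulr_natr; ring.
have full : \sum_(i < n) \sum_(j < n) (x i - x j) ^+ 2 * (y i - y j) ^+ 2 =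
    2 * (n%:R * A) + 2 * (X * Y) + 4 * P ^+ 2.
  rewrite (eq_bigr _ (fun i _ => inner i)).
  rewrite !big_split /= -!mulr_sumr sumr_const card_ord hx hy -/X -/Y -/A -/P.

  rewrite -mulr_natr; ring.
rewrite sym_sum in full; last first.
- by move=> i; rewrite !subrr expr0n /= mul0r.
- by move=> i j; rewrite -(sqrrN (x i - x j)) -(sqrrN (y i - y j)) !opprB.
set S := \sum_(i < n) _ in full *.
have hA : 0 <= A by apply: sumr_ge0 => i _; rewrite mulr_ge0 // sqr_ge0.
have hnA : 0 <= n%:R * A by rewrite mulr_ge0.
have hP : 0 <= P ^+ 2 by rewrite sqr_ge0.
nra.
Qed.
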